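(* Consider the local time-stepping Adams–Bashforth scheme of order $k$ described in the context, and suppose that for each set $s$ the right-hand side splits as $\mathbf{D}^s(\mathbf{y}^1,\ldots,\mathbf{y}^S)=\mathbf{V}^s(\mathbf{y}^s)+\mathbf{B}^s(\mathbf{y}^1,\ldots,\mathbf{y}^S)$, where $\mathbf{V}^s$ depends only on $\mathbf{y}^s$. Then for every set $s$ and step index $m$ (large enough that all indices exist), $$\mathbf{y}^s_{m+1}-\mathbf{y}^s_m=\Delta t^s_m\sum_{j=0}^{k-1}\alpha^s_{mj}\,\mathbf{V}^s(\mathbf{y}^s_{m-j})+\sum_{n=n^s(m)}^{n^s(m+1)-1}\ \sum_{q^1=m^1(n)-(k-1)}^{m^1(n)}\cdots\sum_{q^S=m^S(n)-(k-1)}^{m^S(n)}\beta_{n;q^1\cdots q^S}\,\mathbf{B}^s(\mathbf{y}^1_{q^1},\ldots,\mathbf{y}^S_{q^S}),$$ where $\Delta t^s_m=t^s_{m+1}-t^s_m$ and $\alpha^s_{mj}=\frac{1}{\Delta t^s_m}\int_{t^s_m}^{t^s_{m+1}}\ell_j(t;t^s_m,t^s_{m-1},\ldots,t^s_{m-(k-1)})\,dt$ are the standard (variable-step) Adams–Bashforth coefficients for the evaluation times of set $s$. That is, the volume part is advanced by the standard global Adams–Bashforth rule on set $s$'s own times, and only the coupling terms use the local time-stepping coefficients.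
   Context: We solve an autonomous system $\frac{d\mathbf{y}}{dt}=\mathbf{D}(\mathbf{y})$, $\mathbf{y}\in\mathbb{R}^N$. The components of $\mathbf{y}$ are partitioned into $S$ sets, $\mathbf{y}=(\mathbf{y}^1,\ldots,\mathbf{y}^S)$, and $\mathbf{D}^s$ denotes the components of $\mathbf{D}$ belonging to set $s$. Set $s$ is evaluated at strictly increasing times $t^s_0<t^s_1<\cdots$, and $\mathbf{y}^s_q$ denotes the numerical value of $\mathbf{y}^s$ at time $t^s_q$. Let $\tilde t_0<\tilde t_1<\cdots$ be the increasing enumeration of the union of all evaluation times of all sets, $\Delta\tilde t_n=\tilde t_{n+1}-\tilde t_n$. For each $s,n$ let $m^s(n)$ be the index with $t^s_{m^s(n)}\le\tilde t_n<t^s_{m^s(n)+1}$, and let $n^s(m)$ be defined by $\tilde t_{n^s(m)}=t^s_m$. Lagrange polynomials: $\ell_j(t;\tau_0,\ldots,\tau_{k-1})=\prod_{i\ne j}\frac{t-\tau_i}{\tau_j-\tau_i}$. Adams–Bashforth coefficients for the merged sequence: $\tilde\alpha_{ni}=\frac{1}{\Delta\tilde t_n}\int_{\tilde t_n}^{\tilde t_{n+1}}\ell_i(t;\tilde t_n,\ldots,\tilde t_{n-(k-1)})\,dt$. Define $\beta_{n;q^1\cdots q^S}=\Delta\tilde t_n\sum_{i=0}^{k-1}\tilde\alpha_{ni}\prod_{s=1}^S\ell_{m^s(n)-q^s}\big(\tilde t_{n-i};t^s_{m^s(n)},\ldots,t^s_{m^s(n)-(k-1)}\big)$. The scheme updates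 set $s$ from $t^s_m$ to $t^s_{m+1}$ by $\mathbf{y}^s_{m+1}=\mathbf{y}^s_m+\sum_{n=n^s(m)}^{n^s(m+1)-1}\sum_{q^1=m^1(n)-(k-1)}^{m^1(n)}\cdots\sum_{q^S=m^S(n)-(k-1)}^{m^S(n)}\beta_{n;q^1\cdots q^S}\,\mathbf{D}^s(\mathbf{y}^1_{q^1},\ldots,\mathbf{y}^S_{q^S})$. *)

(* Defs.v *)
From HB Require Import structures.
From mathcomp Require Import all_boot all_order all_algebra.
From mathcomp Require Import all_classical all_reals all_analysis.
Set Implicit Arguments. Unset Strict Implicit. Unset Printing Implicit Defensive.
Import Order.TTheory GRing.Theory Num.Theory.
Import numFieldNormedType.Exports.
Local Open Scope classical_set_scope.
Local Open Scope ring_scope.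

Definition lagr (R : realType) (k : nat) (tau : nat -> R) (j : nat) (t : R) : R :=
  \prod_(i < k | (i : nat) != j) ((t - tau i) / (tau j - tau i)).

Definition integ (R : realType) (a b : R) (f : R -> R) : R :=
  \int[@lebesgue_measure R]_(x in `[a, b]) f x.

Definition abcoef (R : realType) (k : nat) (tau : nat -> R) (n i : nat) : R :=
  (tau n.+1 - tau n)^-1 * integ (tau n) (tau n.+1) (lagr k (fun j => tau (n - j)%N) i).

(* beta_{n; q^1 ... q^S}; q : 'I_S -> nat gives the actual indices q^s.
   t s q = t^s_q, tt = merged times, msf s n = m^s(n). *)
Definition lts_beta (R : realType) (S k : nat) (t : 'I_S -> nat -> R)
    (tt : nat -> R) (msf : 'I_S -> nat -> nat) (n : nat) (q : 'I_S -> nat) : R :=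
  (tt n.+1 - tt n) * \sum_(i < k) (abcoef k tt n i *
     \prod_(s' < S) lagr k (fun j => t s' (msf s' n - j)%N) (msf s' n - q s')%N
                         (tt (n - i)%N)).

(* Main.v *)
Require Import Defs.
From HB Require Import structures.
From mathcomp Require Import all_boot all_order all_algebra.
From mathcomp Require Import all_classical all_reals all_analysis.
From mathcomp Require Import zify.
Import Order.TTheory GRing.Theory Num.Theory.
Local Open Scope ring_scope.

Set Implicit Arguments. Unset Strict Implicit.
Section Helpers.
Import numFieldNormedType.Exports.
Local Open Scope classical_set_scope.
Local Open Scope ring_scope.
Variable R : realType.

Lemma integ_poly (a b : R) (p P : {poly R}) : a < b -> P^`() = p ->
  integ a b (horner p) = P.[b] - P.[a].
Proof.
move=> ab dP.
rewrite /integ /Rintegral (@continuous_FTC2 _ _ (horner P))//=.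
- apply: continuous_in_subspaceT => x _; exact: continuous_horner.
- split.
  + by move=> x _; exact: derivable_horner.
  + apply: cvg_at_right_filter; exact: continuous_horner.
  + apply: cvg_at_left_filter; exact: continuous_horner.
- by move=> x _; rewrite -derivE dP.
Qed.

Definition prim (p : {poly R}) : {poly R} :=
  \poly_(i < (size p).+1) (if i == 0%N then 0 else p`_i.-1 / (i%:R : R)).

Lemma prim_deriv p : (prim p)^`() = p.
Proof.
apply/polyP => i; rewrite coef_deriv coef_poly ltnS.
case: ltnP => H; last by rewrite mul0rn nth_default.
by rewrite -mulrnAr -mulr_natr mulVf ?mulr1 // pnatr_eq0.
Qed.

Definition Lp (k : nat) (tau : nat -> R) (j : nat) : {poly R} :=
  (\prod_(i < k | (i : nat) != j) ('X - (tau i)%:P)) *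
  (\prod_(i < k | (i : nat) != j) (tau j - tau i)^-1)%:P.

Lemma lagrE k tau j : lagr k tau j = horner (Lp k tau j).
Proof.
apply/funext => x; rewrite /lagr hornerM hornerC horner_prod -big_split.
by apply: eq_bigr => i _ /=; rewrite hornerXsubC.
Qed.

Lemma size_Lp k tau j : (j < k)%N -> (size (Lp k tau j) <= k)%N.
Proof.
move=> jk; apply: leq_trans (size_mul_leq _ _) _.
have h1 := size_polyC_leq1 (\prod_(i < k | (i : nat) != j) (tau j - tau i)^-1).
rewrite -big_filter size_prod_XsubC size_filter.
have h2 : (count (fun i : 'I_k => (i : nat) != j) (index_enum 'I_k) < k)%N.
  have := count_predC (fun i : 'I_k => (i : nat) != j) (index_enum 'I_k).
  have : has (predC (fun i : 'I_k => (i : nat) != j)) (index_enum 'I_k).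
    by apply/hasP; exists (Ordinal jk); rewrite ?mem_index_enum //= negbK.
  rewrite has_count [index_enum _]unlock -enumT size_enum_ord => h3 h4.
  move: h3 h4; move: (count _ _) (count _ _) => a b; lia.
move: h1 h2; move: (size _) (count _ _) => a b; lia.
Qed.

Definition injk k (tau : nat -> R) := forall a b, (a < k)%N -> (b < k)%N -> tau a = tau b -> a = b.

Lemma Lp_node k tau j c : injk k tau -> (j < k)%N -> (c < k)%N ->
  (Lp k tau j).[tau c] = (c == j)%:R.
Proof.
move=> inj jk ck; rewrite hornerM hornerC horner_prod.
have [->|cj] := eqVneq c j.
  rewrite -big_split /= big1 // => i ij; rewrite hornerXsubC mulfV // subr_eq0.
  by apply/eqP => /inj h; move: ij; rewrite h ?eqxx.
by rewrite (bigD1 (Ordinal ck)) //= hornerXsubC subrr !mul0r.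
Qed.

Lemma size_sum_le k (I : finType) (F : I -> {poly R}) :
  (forall i, size (F i) <= k)%N -> (size (\sum_i F i)%R <= k)%N.
Proof.
move=> H; apply: (big_ind (fun q : {poly R} => size q <= k)%N) => //.
  by rewrite size_poly0.
by move=> x y hx hy; apply: leq_trans (size_polyD _ _) _; rewrite geq_max hx hy.
Qed.

Lemma interp k tau (p : {poly R}) : injk k tau -> (size p <= k)%N ->
  \sum_(j < k) p.[tau j] *: Lp k tau j = p.
Proof.
move=> inj sp; apply/eqP; rewrite -subr_eq0; apply/negPn/negP => nz.
have := @max_poly_roots _ _ [seq tau (val i) | i <- enum 'I_k] nz.
rewrite size_map size_enum_ord.
have -> : all (root (\sum_(j < k) p.[tau j] *: Lp k tau j - p))
            [seq tau (val i) | i <- enum 'I_k].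
  apply/allP => x /mapP [i _ ->]; rewrite /root hornerD hornerN horner_sum.
  rewrite (bigD1 i) //= big1 => [|j ji].
    by rewrite hornerZ Lp_node // eqxx mulr1 addr0 subrr.
  have h : (i : nat) != j by rewrite eq_sym; exact: ji.
  by rewrite hornerZ Lp_node // (negbTE h) mulr0.
rewrite map_inj_uniq ?enum_uniq; last by move=> a b h; apply: val_inj; exact: (inj _ _ (ltn_ord a) (ltn_ord b) h).
move=> /(_ isT isT); apply/negP; rewrite -leqNgt.
apply: leq_trans (size_polyD _ _) _; rewrite geq_max size_polyN sp andbT.
apply: size_sum_le => i; apply: leq_trans (size_scale_leq _ _) _.
exact: size_Lp.
Qed.


Lemma sum_ffun_split (I : finType) (k : nat) (V : lmodType R) (s : I)
  (F : I -> 'I_k -> R) (W : 'I_k -> V) :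
  (forall s', s' != s -> \sum_b F s' b = 1) ->
  \sum_(q : {ffun I -> 'I_k}) (\prod_s' F s' (q s')) *: W (q s) =
  \sum_a F s a *: W a.
Proof.
move=> H1.
transitivity (\sum_(q : {ffun I -> 'I_k}) \sum_a
   (((q s == a)%:R * \prod_s' F s' (q s')) *: W a)).
  apply: eq_bigr => q _; rewrite (bigD1 (q s)) //= eqxx mul1r [X in _ = _ + X]big1 ?addr0 //.
  by move=> a; rewrite eq_sym => /negbTE ->; rewrite mul0r scale0r.
rewrite exchange_big; apply: eq_bigr => a _; rewrite -scaler_suml; congr (_ *: _).
pose G s' b := if s' == s then (b == a)%:R * F s' b else F s' b.
transitivity (\sum_(q : {ffun I -> 'I_k}) \prod_s' G s' (q s')).
  apply: eq_bigr => q _; rewrite (bigD1 s) //= [in RHS](bigD1 s) //= /G eqxx mulrA.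
  congr (_ * _); apply: eq_bigr => s' /negbTE -> //.
rewrite -bigA_distr_bigA (bigD1 s) //= [X in _ * X]big1 => [|s' s's]; last first.
  by rewrite /G (negbTE s's) H1.
rewrite mulr1 /G eqxx (bigD1 a) //= eqxx mul1r big1 ?addr0 //.
by move=> b /negbTE ->; rewrite mul0r.
Qed.

Lemma part k (tau : nat -> R) x : (0 < k)%N -> injk k tau ->
  \sum_(j < k) lagr k tau j x = 1.
Proof.
move=> k0 inj.
have := @interp k tau 1 inj; rewrite size_poly1 => /(_ k0) /(congr1 (horner^~ x)).
rewrite horner_sum hornerC => <-; apply: eq_bigr => j _.
by rewrite hornerZ hornerC mul1r lagrE.
Qed.

Lemma revsum (V : zmodType) k (f : nat -> V) :
  \sum_(b < k) f (k.-1 - b)%N = \sum_(b < k) f b.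
Proof.
rewrite (reindex_inj rev_ord_inj) /=; apply: eq_bigr => b _; congr f.
have := ltn_ord b; rewrite /=; lia.
Qed.
End Helpers.
Unset Implicit Arguments.

Theorem mainTheorem3 (R : realType) (S k : nat) (N : 'I_S -> nat)
  (t : 'I_S -> nat -> R) (tt : nat -> R)
  (msf : 'I_S -> nat -> nat) (nsf : 'I_S -> nat -> nat)
  (D : forall s : 'I_S, (forall s' : 'I_S, 'rV[R]_(N s')) -> 'rV[R]_(N s))
  (V : forall s : 'I_S, 'rV[R]_(N s) -> 'rV[R]_(N s))
  (B : forall s : 'I_S, (forall s' : 'I_S, 'rV[R]_(N s')) -> 'rV[R]_(N s))
  (y : forall s : 'I_S, nat -> 'rV[R]_(N s)) :
  (0 < k)%N ->
  (* evaluation times of each set are strictly increasing *)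
  (forall s q, t s q < t s q.+1) ->
  (* tt is the increasing enumeration of the union of all evaluation times *)
  (forall n, tt n < tt n.+1) ->
  (forall n, exists s q, tt n = t s q) ->
  (forall s q, exists n, tt n = t s q) ->
  (* m^s(n) and n^s(m) *)
  (forall s n, t s (msf s n) <= tt n < t s (msf s n).+1) ->
  (forall s m, tt (nsf s m) = t s m) ->
  (* splitting of the right-hand side *)
  (forall s Y, D s Y = V s (Y s) + B s Y) ->
  (* the local time-stepping scheme (whenever all indices exist) *)
  (forall s m, (forall s', (k.-1 <= msf s' (nsf s m))%N) ->
     y s m.+1 = y s m +
       \sum_(nsf s m <= n < nsf s m.+1) \sum_(q : {ffun 'I_S -> 'I_k})
          lts_beta k t tt msf n (fun s' => (msf s' n - k.-1 + q s')%N) *: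
          D s (fun s' => y s' (msf s' n - k.-1 + q s')%N)) ->
  forall s m, (forall s', (k.-1 <= msf s' (nsf s m))%N) ->
    y s m.+1 - y s m =
      (t s m.+1 - t s m) *: \sum_(j < k) (abcoef k (t s) m j *: V s (y s (m - j)%N))
      + \sum_(nsf s m <= n < nsf s m.+1) \sum_(q : {ffun 'I_S -> 'I_k})
          lts_beta k t tt msf n (fun s' => (msf s' n - k.-1 + q s')%N) *:
          B s (fun s' => y s' (msf s' n - k.-1 + q s')%N).
Proof.
Proof.
move=> k0 ht htt _ _ hm hn hD hsch s m hk.
rewrite hsch // (addrC (y s m)) addrK.
under eq_bigr => n _ do under eq_bigr => q _ do rewrite hD scalerDr.
under eq_bigr => n _ do rewrite big_split /=.
rewrite big_split /=; congr (_ + _).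
have ttlt : forall a b, (a < b)%N -> tt a < tt b.
  move=> a b; elim: b => // b IH; rewrite ltnS leq_eqVlt => /orP [/eqP -> | /IH h].
    exact: htt.
  exact: lt_trans h (htt b).
have tlt : forall s' a b, (a < b)%N -> t s' a < t s' b.
  move=> s' a b; elim: b => // b IH; rewrite ltnS leq_eqVlt => /orP [/eqP -> | /IH h].
    exact: ht.
  exact: lt_trans h (ht s' b).
have ttle : forall a b, (a <= b)%N -> tt a <= tt b.
  by move=> a b; rewrite leq_eqVlt => /orP [/eqP -> // | /ttlt /ltW].
have tle : forall s' a b, (a <= b)%N -> t s' a <= t s' b.
  by move=> s' a b; rewrite leq_eqVlt => /orP [/eqP -> // | /(tlt s') /ltW].
have nlt : forall j, (nsf s j < nsf s j.+1)%N.
  by move=> j; rewrite ltnNge; apply/negP => /ttle; rewrite !hn leNgt ht.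
have nge : forall j, (j <= nsf s j)%N.
  by elim => // j IH; exact: leq_ltn_trans IH (nlt j).
have meq : forall n, (nsf s m <= n < nsf s m.+1)%N -> msf s n = m.
  move=> n /andP [h1 h2].
  have e1 : t s m <= tt n by rewrite -hn; exact: ttle.
  have e2 : tt n < t s m.+1 by rewrite -hn; exact: ttlt.
  case/andP: (hm s n) => f1 f2.
  apply/eqP; rewrite eqn_leq; apply/andP; split.
    rewrite -ltnS ltnNge; apply/negP => /(tle s) h.
    by have := le_lt_trans (le_trans h f1) e2; rewrite ltxx.
  rewrite -ltnS ltnNge; apply/negP => /(tle s) h.
  by have := lt_le_trans f2 (le_trans h e1); rewrite ltxx.
have mmono : forall s' a b, (a <= b)%N -> (msf s' a <= msf s' b)%N.
  move=> s' a b ab; rewrite leqNgt; apply/negP => /(tle s') h.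
  case/andP: (hm s' a) => fa _; case/andP: (hm s' b) => _ fb.
  by have := lt_le_trans fb (le_trans h (le_trans fa (ttle _ _ ab))); rewrite ltxx.
have n01 : (nsf s m <= nsf s m.+1)%N := ltnW (nlt m).
have km : (k.-1 <= m)%N by have := hk s; rewrite meq // leqnn nlt.
have kn : forall n, (nsf s m <= n)%N -> (k.-1 <= n)%N.
  by move=> n h; exact: leq_trans km (leq_trans (nge m) h).
have ks : forall s' n, (nsf s m <= n)%N -> (k.-1 <= msf s' n)%N.
  by move=> s' n h; exact: leq_trans (hk s') (mmono _ _ _ h).
have tinj : forall s' M, (k.-1 <= M)%N -> injk k (fun j => t s' (M - j)%N).
  move=> s' M hM a b ha hb e.
  have : (M - a = M - b)%N.
    apply/eqP; rewrite eqn_leq; apply/andP; split; rewrite leqNgt; apply/negP => /(tlt s');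
      by rewrite e ltxx.
  lia.
have ttinj : forall M, (k.-1 <= M)%N -> injk k (fun j => tt (M - j)%N).
  move=> M hM a b ha hb e.
  have : (M - a = M - b)%N.
    apply/eqP; rewrite eqn_leq; apply/andP; split; rewrite leqNgt; apply/negP => /ttlt;
      by rewrite e ltxx.
  lia.
pose La (a : nat) := Lp k (fun j => t s (m - j)%N) (k.-1 - a)%N.
pose Wa (a : 'I_k) := V s (y s (m - k.-1 + a)%N).
have sLa : forall a, (size (La a) <= k)%N.
  move=> a; apply: size_Lp; lia.
have step1 : forall n, (nsf s m <= n < nsf s m.+1)%N ->
    \sum_(q : {ffun 'I_S -> 'I_k})
        lts_beta k t tt msf n (fun s' => (msf s' n - k.-1 + q s')%N) *:
        V s (y s (msf s n - k.-1 + q s)%N) =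
    \sum_(a < k) integ (tt n) (tt n.+1) (horner (La a)) *: Wa a.
  move=> n nr; have Mn := meq n nr.
  have kn' := kn n (proj1 (andP nr)).
  pose F (i : nat) (s' : 'I_S) (b : 'I_k) := lagr k (fun j => t s' (msf s' n - j)%N)
     (msf s' n - (msf s' n - k.-1 + b))%N (tt (n - i)%N).
  pose W (b : 'I_k) := V s (y s (msf s n - k.-1 + b)%N).
  have hpart : forall i s', \sum_b F i s' b = 1.
    move=> i s'; rewrite /F.
    have ksn := ks s' n (proj1 (andP nr)).
    transitivity (\sum_(b < k) lagr k (fun j => t s' (msf s' n - j)%N) (k.-1 - b)%N (tt (n - i)%N)).
      apply: eq_bigr => b _; congr lagr; have := ltn_ord b; lia.
    rewrite (@revsum _ k (fun b => lagr k (fun j => t s' (msf s' n - j)%N) b (tt (n - i)%N))).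
    exact: part k0 (tinj _ _ ksn).
  transitivity (\sum_(i < k) ((tt n.+1 - tt n) * abcoef k tt n i) *:
       \sum_(q : {ffun 'I_S -> 'I_k}) (\prod_s' F i s' (q s')) *: W (q s)).
    symmetry; under eq_bigr => i _ do rewrite scaler_sumr.
    rewrite exchange_big /=; apply: eq_bigr => q _.
    rewrite /lts_beta mulr_sumr scaler_suml; apply: eq_bigr => i _.
    by rewrite mulrA scalerA.
  transitivity (\sum_(i < k) ((tt n.+1 - tt n) * abcoef k tt n i) *:
       \sum_(a < k) F i s a *: W a).
    by apply: eq_bigr => i _; rewrite sum_ffun_split // => s' _; exact: hpart.
  under eq_bigr => i _ do rewrite scaler_sumr.
  rewrite exchange_big /=; apply: eq_bigr => a _.
  under eq_bigr => i _ do rewrite scalerA.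
  rewrite -scaler_suml /W Mn; congr (_ *: _).
  have dn : tt n.+1 - tt n != 0 by rewrite subr_eq0 gt_eqF // htt.
  transitivity (\sum_(i < k) integ (tt n) (tt n.+1) (lagr k (fun j => tt (n - j)%N) i) *
                  (La a).[tt (n - i)%N]).
    apply: eq_bigr => i _; rewrite /abcoef mulVKf // /F Mn lagrE /La.
    have e : (m - (m - k.-1 + a) = k.-1 - a)%N by have := ltn_ord a; lia.
    by rewrite e lagrE.
  pose P := \sum_(i < k) (La a).[tt (n - i)%N] *: prim (Lp k (fun j => tt (n - j)%N) i).
  rewrite (integ_poly (P := P) (htt n)); last first.
    rewrite /P raddf_sum -[RHS](interp (ttinj _ kn') (sLa a)).
    by apply: eq_bigr => i _; rewrite /= derivZ prim_deriv.
  rewrite /P !horner_sum -sumrB; apply: eq_bigr => i _.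
  by rewrite !hornerZ -mulrBr mulrC lagrE (integ_poly (htt n) (prim_deriv _)).
rewrite (eq_big_nat _ _ step1) exchange_big /=.
transitivity (\sum_(a < k) integ (t s m) (t s m.+1) (horner (La a)) *: Wa a).
  apply: eq_bigr => a _; rewrite -scaler_suml; congr (_ *: _).
  rewrite (integ_poly (P := prim (La a)) (ht s m) (prim_deriv _)) -!hn.
  apply: (@telescope_sumr_eq _ _ _ (fun n => (prim (La a)).[tt n])) n01 _ => n' nr.
  exact: integ_poly (htt n') (prim_deriv _).
have ds : t s m.+1 - t s m != 0 by rewrite subr_eq0 gt_eqF // ht.
symmetry; rewrite scaler_sumr.
under eq_bigr => j _ do rewrite scalerA /abcoef (mulVKf ds) lagrE.
rewrite -(@revsum _ k (fun j => integ (t s m) (t s m.+1)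
   (horner (Lp k (fun i => t s (m - i)%N) j)) *: V s (y s (m - j)%N))).
apply: eq_bigr => a _; rewrite /La /Wa.
have e : (m - (k.-1 - a) = m - k.-1 + a)%N by have := ltn_ord a; lia.
by rewrite e.
Qed.
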